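(* Let $b>0$. For $\lambda\in\mathbb{C}\setminus[2,\infty)$ write $\lambda=-2\cos(\omega)$ with $\omega\in\Omega=\{\omega\in\mathbb{C}:\ \operatorname{Re}\omega\in[0,\pi),\ \operatorname{Im}\omega\in\mathbb{R}\}$, and define $$G_\lambda(x)=\frac{1}{2b\sin(\omega)}\,\frac{\sinh\left(\frac{\omega}{b}x\right)}{\sinh\left(\frac{\pi}{b}x\right)},\qquad x\in\mathbb{R}\setminus\{0\},\qquad G_\lambda(0)=\frac{1}{2\pi b}\,\frac{\omega}{\sin(\omega)}.$$ Then for every $\lambda\in\mathbb{C}\setminus[2,\infty)$, $$|G_\lambda(x)|\le|G_\lambda(0)|\quad\text{for all }x\in\mathbb{R}.$$
   Context: $G_\lambda(x-y)$ is the integral kernel of the resolvent $(W_0(b)-\lambda)^{-1}$, where $W_0(b)$ is multiplication by $2\cosh(2\pi bk)$ in Fourier space. The value $G_\lambda(0)$ is the limit of $G_\lambda(x)$ as $x\to0$. At $\omega=0$ (i.e. $\lambda=-2$) the expressions are understood by continuity in $\omega$: $\frac{\sinh(\omega x/b)}{\sin\omega}\to x/b$ and $\frac{\omega}{\sin\omega}\to1$. *)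

(* Defs.v *)
From Stdlib Require Import Reals.
From Coquelicot Require Import Coquelicot.
Open Scope R_scope.

Definition Cexp (z : C) : C := (exp (Re z) * cos (Im z), exp (Re z) * sin (Im z)).

Definition Csin (z : C) : C := ((Cexp (Ci * z) - Cexp (- (Ci * z))) / (2 * Ci))%C.
Definition Ccos (z : C) : C := ((Cexp (Ci * z) + Cexp (- (Ci * z))) / 2)%C.
Definition Csinh (z : C) : C := ((Cexp z - Cexp (- z)) / 2)%C.

Definition Ceq_dec (z w : C) : {z = w} + {z <> w}.
Proof.
  destruct z as [a b], w as [c d].
  destruct (Req_EM_T a c) as [H1|H1]; destruct (Req_EM_T b d) as [H2|H2];
    [left; subst; reflexivity | right | right | right]; intro H; inversion H; auto.
Defined.

Definition Omega (w : C) : Prop := 0 <= Re w < PI.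

Definition in_ray2 (l : C) : Prop := Im l = 0 /\ 2 <= Re l.

(* The resolvent kernel G_lambda(x), written in terms of omega (lambda = -2 cos omega).
   At omega = 0 the expressions are taken by continuity:
   sinh(omega x / b) / sin omega -> x / b and omega / sin omega -> 1. *)
Definition Gker (b : R) (w : C) (x : R) : C :=
  if Req_EM_T x 0 then
    (if Ceq_dec w 0 then RtoC (1 / (2 * PI * b))
     else (w / (RtoC (2 * PI * b) * Csin w))%C)
  else
    (if Ceq_dec w 0 then RtoC ((x / b) / (2 * b * sinh (PI / b * x)))
     else (Csinh (w * RtoC (x / b)) / (RtoC (2 * b) * Csin w * RtoC (sinh (PI / b * x))))%C).

(* Main.v *)
Require Import Defs.
From Stdlib Require Import Reals Lra Psatz.
From Coquelicot Require Import Coquelicot.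
Open Scope R_scope.

Lemma cosh_ge1 x : 1 <= cosh x.
Proof.
  unfold cosh. rewrite exp_Ropp. assert (Hy := exp_pos x).
  set (y := exp x) in *.
  assert (E : (y + /y)/2 - 1 = (y-1)^2 * /y / 2) by (field; lra).
  assert (0 < / y) by (apply Rinv_0_lt_compat; lra).
  assert (0 <= (y-1)^2 * /y / 2). { apply Rmult_le_pos; [apply Rmult_le_pos; [apply pow2_ge_0|lra]|lra]. }
  lra.
Qed.

Lemma cosh2 x : cosh x ^ 2 = 1 + sinh x ^ 2.
Proof.
  unfold cosh, sinh. rewrite exp_Ropp. assert (Hy := exp_pos x).
  field. lra.
Qed.

Lemma sinh_odd x : sinh (- x) = - sinh x.
Proof. unfold sinh. rewrite Ropp_involutive. field. Qed.

Lemma sinh_ge_id s : 0 <= s -> s <= sinh s.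
Proof.
  intros Hs. destruct (Req_dec s 0) as [->|Hn]. rewrite sinh_0; lra.
  destruct (MVT_cor3 sinh cosh 0 s) as [c [H1 [H2 H3]]]. lra.
  intros; apply derivable_pt_lim_sinh.
  rewrite H3, sinh_0. assert (Hc := cosh_ge1 c). nra.
Qed.

Lemma abs_sinh_ge x : Rabs x <= Rabs (sinh x).
Proof.
  destruct (Rle_dec 0 x).
  - assert (H := sinh_ge_id x r). rewrite !Rabs_right; lra.
  - assert (H := sinh_ge_id (-x) ltac:(lra)). rewrite sinh_odd in H.
    rewrite !Rabs_left1; lra.
Qed.

Lemma h_nonneg s : 0 <= s -> sinh s <= s * cosh s.
Proof.
  intros Hs. destruct (Req_dec s 0) as [->|Hn]. rewrite sinh_0; lra.
  destruct (MVT_cor3 (fun s => s * cosh s - sinh s) (fun s => s * sinh s) 0 s)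
    as [c [H1 [H2 H3]]]. lra.
  { intros x _ _.
    assert (H: derivable_pt_lim (fun s => s * cosh s - sinh s) x
                 ((1 * cosh x + x * sinh x) - cosh x)).
    { apply (derivable_pt_lim_minus (fun s => s * cosh s) sinh).
      apply (derivable_pt_lim_mult id cosh). apply derivable_pt_lim_id.
      apply derivable_pt_lim_cosh. apply derivable_pt_lim_sinh. }
    replace (x * sinh x) with ((1 * cosh x + x * sinh x) - cosh x) by ring. exact H. }
  cbv beta in H3. rewrite sinh_0 in H3. assert (Hc := sinh_ge_id c H1).
  assert (0 <= c * sinh c * (s-0)) by (apply Rmult_le_pos; [apply Rmult_le_pos|]; lra).
  lra.
Qed.

Lemma g_mono u v : 0 < u -> u <= v -> v * sinh u <= u * sinh v.
Proof.
  intros Hu Huv. destruct (Req_dec u v) as [->|Hn]. lra.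
  destruct (MVT_cor3 (fun s => sinh s / s) (fun s => (cosh s * s - 1 * sinh s) / s ^ 2) u v)
    as [c [H1 [H2 H3]]]. lra.
  { intros x Hx _.
    assert (H: derivable_pt_lim (fun s => sinh s / s) x
                 ((cosh x * id x - 1 * sinh x) / (id x) ^ 2)).
    { replace ((id x) ^ 2) with (Rsqr (id x)) by (unfold Rsqr; ring).
      apply (derivable_pt_lim_div sinh id). apply derivable_pt_lim_sinh.
      apply derivable_pt_lim_id. unfold id; lra. }
    exact H. }
  cbv beta in H3. assert (Hh := h_nonneg c ltac:(lra)).
  assert (0 <= (cosh c * c - 1 * sinh c) / c ^ 2).
  { apply Rdiv_le_0_compat. lra. assert (0 < c) by lra. nra. }
  assert (sinh u / u <= sinh v / v) by nra.
  replace (v * sinh u) with (u * v * (sinh u / u)) by (field; lra).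
  replace (u * sinh v) with (u * v * (sinh v / v)) by (field; lra).
  apply Rmult_le_compat_l. nra. exact H0.
Qed.

Lemma key a t : 0 <= a <= PI -> PI * Rabs (sinh (a * t)) <= a * Rabs (sinh (PI * t)).
Proof.
  intros Ha.
  assert (Hpos : forall t, 0 <= t -> PI * Rabs (sinh (a * t)) <= a * Rabs (sinh (PI * t))).
  { clear t. intros t Ht.
    assert (HP := PI_RGT_0).
    destruct (Req_dec t 0) as [->|Htn].
    { rewrite !Rmult_0_r, sinh_0, Rabs_R0. lra. }
    destruct (Req_dec a 0) as [->|Han].
    { rewrite !Rmult_0_l, sinh_0, Rabs_R0. assert (H := Rabs_pos (sinh (PI*t))). lra. }
    assert (Hg := g_mono (a*t) (PI*t) ltac:(nra) ltac:(nra)).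
    assert (H1 := sinh_ge_id (a*t) ltac:(nra)).
    assert (H2 := sinh_ge_id (PI*t) ltac:(nra)).
    rewrite !Rabs_right by nra.
    apply (Rmult_le_reg_l t). lra. nra. }
  destruct (Rle_dec 0 t). now apply Hpos.
  assert (H := Hpos (-t) ltac:(lra)).
  replace (a * - t) with (- (a*t)) in H by ring.
  replace (PI * - t) with (- (PI*t)) in H by ring.
  rewrite !sinh_odd, !Rabs_Ropp in H. exact H.
Qed.

Lemma abs_sin_le y : Rabs (sin y) <= Rabs y.
Proof.
  assert (HP := PI2_1).
  assert (Hpos : forall y, 0 <= y -> Rabs (sin y) <= y).
  { clear y. intros y Hy. assert (Hb := SIN_bound y).
    destruct (Rle_dec y 1).
    - destruct (Req_dec y 0) as [->|Hn]. rewrite sin_0, Rabs_R0; lra.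
      assert (0 <= sin y) by (apply sin_ge_0; lra).
      assert (Hs := sin_lt_x y ltac:(lra)). rewrite Rabs_right; lra.
    - unfold Rabs; destruct (Rcase_abs (sin y)); lra. }
  destruct (Rle_dec 0 y).
  - rewrite (Rabs_right y) by lra. now apply Hpos.
  - assert (H := Hpos (-y) ltac:(lra)). rewrite sin_neg, Rabs_Ropp in H.
    rewrite (Rabs_left y); lra.
Qed.

Lemma Csinh_eq a c : Csinh (a, c) = (sinh a * cos c, cosh a * sin c).
Proof.
  unfold Csinh, Cexp, sinh, cosh. apply injective_projections; simpl;
  rewrite ?cos_neg, ?sin_neg; unfold Rdiv; ring_simplify; try field.
Qed.

Lemma Csin_eq a c : Csin (a, c) = (sin a * cosh c, cos a * sinh c).
Proof.
  unfold Csin. replace (Ci * (a,c))%C with ((-c, a) : C)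
    by (apply injective_projections; simpl; ring).
  unfold Cexp, sinh, cosh. apply injective_projections; simpl;
  rewrite ?cos_neg, ?sin_neg, ?Ropp_involutive; unfold Rdiv; ring_simplify; try field.
Qed.

Lemma Csin_nz w : Omega w -> w <> 0%C -> Csin w <> 0%C.
Proof.
  destruct w as [a c]. unfold Omega; simpl. intros [Ha1 Ha2] Hw. rewrite Csin_eq.
  intro H. injection H as H1 H2.
  assert (Hc := cosh_ge1 c).
  assert (Hs : sin a = 0) by (destruct (Rmult_integral _ _ H1); lra).
  assert (Ha : a = 0).
  { destruct (Req_dec a 0). auto. assert (0 < sin a) by (apply sin_gt_0; lra). lra. }
  subst a. rewrite cos_0, Rmult_1_l in H2.
  assert (c = 0).
  { destruct (Rtotal_order c 0) as [h|[h|h]]; auto.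
    - assert (K := sinh_ge_id (-c) ltac:(lra)). rewrite sinh_odd in K. lra.
    - assert (K := sinh_ge_id c ltac:(lra)). lra. }
  subst c. apply Hw. reflexivity.
Qed.

Lemma Cmod_pair x y : Cmod (x, y) = sqrt (x ^ 2 + y ^ 2).
Proof. reflexivity. Qed.

Lemma main_ineq a c t : 0 <= a <= PI ->
  PI * Cmod (Csinh ((a, c) * RtoC t)) <= Cmod (a, c) * Rabs (sinh (PI * t)).
Proof.
  intros Ha.
  assert (E : ((a, c) * RtoC t)%C = (a * t, c * t)).
  { apply injective_projections; simpl; ring. }
  rewrite E, Csinh_eq, !Cmod_pair.
  assert (HP := PI_RGT_0).
  apply Rsqr_incr_0_var.
  2: { apply Rmult_le_pos. apply sqrt_pos. apply Rabs_pos. }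
  rewrite !Rsqr_mult, !Rsqr_sqrt.
  2: { nra. }
  2: { nra. }
  assert (K1 := key a t Ha).
  assert (K2 := abs_sin_le (c * t)).
  assert (K3 := abs_sinh_ge (PI * t)).
  rewrite Rabs_mult in K2, K3. rewrite (Rabs_right PI) in K3 by lra.
  assert (K4 : PI * Rabs (sin (c * t)) <= Rabs c * Rabs (sinh (PI * t))).
  { apply Rle_trans with (PI * (Rabs c * Rabs t)). apply Rmult_le_compat_l; lra.
    replace (PI * (Rabs c * Rabs t)) with (Rabs c * (PI * Rabs t)) by ring.
    apply Rmult_le_compat_l. apply Rabs_pos. lra. }
  assert (S1 : (PI * Rabs (sinh (a * t)))² <= (a * Rabs (sinh (PI * t)))²).
  { apply Rsqr_incr_1. lra. apply Rmult_le_pos; [lra|apply Rabs_pos].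
    apply Rmult_le_pos; [lra|apply Rabs_pos]. }
  assert (S2 : (PI * Rabs (sin (c * t)))² <= (Rabs c * Rabs (sinh (PI * t)))²).
  { apply Rsqr_incr_1. lra. apply Rmult_le_pos; [lra|apply Rabs_pos].
    apply Rmult_le_pos; apply Rabs_pos. }
  rewrite !Rsqr_mult, <- !Rsqr_abs in S1, S2.
  rewrite <- Rsqr_abs.
  assert (C2 := cosh2 (a * t)). assert (SC := sin2_cos2 (c * t)).
  unfold Rsqr in *.
  assert (AA : Rabs (sinh (PI*t)) * Rabs (sinh (PI*t)) = sinh (PI*t) * sinh (PI*t))
    by (unfold Rabs; destruct (Rcase_abs (sinh (PI*t))); ring).
  rewrite AA in S2.
  assert (L : PI * PI * ((sinh (a * t) * cos (c * t)) ^ 2 + (cosh (a * t) * sin (c * t)) ^ 2)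
     = PI*PI*(sinh (a*t)*sinh (a*t)) + PI*PI*(sin (c*t)*sin (c*t))).
  { assert (Hc: cos (c*t)*cos (c*t) = 1 - sin (c*t)*sin (c*t)) by lra.
    replace ((sinh (a*t) * cos (c*t))^2) with (sinh (a*t)*sinh (a*t)*(cos (c*t)*cos (c*t))) by ring.
    replace ((cosh (a*t)*sin (c*t))^2) with (cosh (a*t)^2 * (sin (c*t)*sin (c*t))) by ring.
    rewrite Hc, C2. ring. }
  rewrite L. replace ((a ^ 2 + c ^ 2) * (sinh (PI * t) * sinh (PI * t))) with
    (a * a * (sinh (PI * t) * sinh (PI * t)) + c * c * (sinh (PI * t) * sinh (PI * t))) by ring.
  lra.
Qed.

Theorem proposition3p2 (b : R) (hb : 0 < b) (lam : C) (hlam : ~ in_ray2 lam)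
  (w : C) (hw : Omega w) (hlw : lam = (- (RtoC 2) * Ccos w)%C) :
  forall x : R, Cmod (Gker b w x) <= Cmod (Gker b w 0).
Proof.
  intros x. destruct (Req_dec x 0) as [->|Hx]. apply Rle_refl.
  assert (HP := PI_RGT_0).
  assert (Hs : PI / b * x = PI * (x / b)) by (field; lra).
  assert (Ht : x / b <> 0) by (intro h; unfold Rdiv in h; apply Rmult_integral in h;
     destruct h as [h|h]; [lra | apply (Rinv_neq_0_compat b); lra]).
  assert (Hsh : PI * Rabs (x / b) <= Rabs (sinh (PI / b * x))).
  { rewrite Hs. assert (K := abs_sinh_ge (PI * (x/b))). rewrite Rabs_mult, (Rabs_right PI) in K by lra. exact K. }
  assert (Hta : 0 < Rabs (x / b)) by (apply Rabs_pos_lt; exact Ht).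
  assert (Hshp : 0 < Rabs (sinh (PI / b * x))) by nra.
  unfold Gker. destruct (Req_EM_T x 0) as [e|_]; [contradiction|].
  destruct (Req_EM_T 0 0) as [_|n]; [|contradiction].
  destruct (Defs.Ceq_dec w 0) as [Hw0|Hw0].
  - rewrite !Cmod_R.
    set (q := sinh (PI / b * x)) in *.
    assert (Hq : q <> 0) by (intro h; rewrite h, Rabs_R0 in Hshp; lra).
    replace (x / b / (2 * b * q)) with ((x / b) * / (2 * b * q)) by reflexivity.
    replace (1 / (2 * PI * b)) with (/ (2 * PI * b)) by (field; lra).
    rewrite !Rabs_mult, !Rabs_inv, !Rabs_mult, !(Rabs_right 2), !(Rabs_right b), (Rabs_right PI) by lra.
    set (r := Rabs q) in *.
    replace (Rabs (x / b) * / (2 * b * r)) with ((PI * Rabs (x / b)) * / (2 * PI * b * r)).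
    2: { field. lra. }
    replace (/ (2 * PI * b)) with (r * / (2 * PI * b * r)) by (field; lra).
    apply Rmult_le_compat_r. left; apply Rinv_0_lt_compat.
    apply Rmult_lt_0_compat; [apply Rmult_lt_0_compat|]; lra. exact Hsh.
  - destruct w as [a c]. assert (Hsin := Csin_nz (a, c) hw Hw0).
    assert (Hsm : 0 < Cmod (Csin (a, c))) by (apply Cmod_gt_0; exact Hsin).
    assert (Hnz : forall z : C, Cmod z <> 0 -> z <> 0%C)
      by (intros z h e; apply h; rewrite e; apply Cmod_0).
    rewrite Cmod_div, Cmod_div.
    2: { apply Hnz. rewrite Cmod_mult, Cmod_R. apply Rgt_not_eq.
         apply Rmult_gt_0_compat; [rewrite Rabs_right|]; nra. }
    2: { apply Hnz. rewrite !Cmod_mult, !Cmod_R. apply Rgt_not_eq.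
         apply Rmult_gt_0_compat; [apply Rmult_gt_0_compat; [rewrite Rabs_right|]|]; nra. }
    rewrite !Cmod_mult, !Cmod_R, !(Rabs_right (2 * b)), (Rabs_right (2 * PI * b)) by nra.
    assert (K := main_ineq a c (x / b) ltac:(unfold Omega in hw; simpl in hw; lra)).
    rewrite <- Hs in K.
    set (q := Rabs (sinh (PI / b * x))) in *.
    set (A := Cmod (Csinh ((a, c) * RtoC (x / b)))) in *.
    set (S := Cmod (Csin (a, c))) in *.
    unfold Rdiv.
    replace (A * / (2 * b * S * q)) with ((PI * A) * / (2 * PI * b * S * q)) by (field; lra).
    replace (Cmod (a, c) * / (2 * PI * b * S)) with ((Cmod (a, c) * q) * / (2 * PI * b * S * q)) by (field; lra).
    apply Rmult_le_compat_r. left; apply Rinv_0_lt_compat.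
    apply Rmult_lt_0_compat; [apply Rmult_lt_0_compat; [apply Rmult_lt_0_compat|]|]; lra. exact K.
Qed.
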